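(* Let $M$ be a $*$-left Ehresmann monoid and $H\subseteq M$ an atomic subset. Then $H$ is proper if and only if for all $h,k\in H$: $h\,\sigma\,k$ holds exactly when $hk^*=kh^*$.
   Context: A $*$-left Ehresmann monoid is a monoid $M$ with unary operations $+,*$ such that $x^+x=x$, $(x^+y^+)^+=x^+y^+$, $x^+y^+=y^+x^+$, $(xy)^+=(xy^+)^+$, $xx^*=x$, $(x^* )^*=x^*$, $x^*y^*=y^*x^*$, $(xy^* )^*y^*=(xy^* )^*$, $(x^* )^+=x^*$, $(x^+)^*=x^+$. Its semilattice of projections is $E=\{a^+\}=\{a^*\}$ (ordered by $e\le f$ iff $ef=e$); $\sigma$ is the least monoid congruence on $M$ containing $E\times E$. $H\subseteq M$ is atomic if: (H1) $E\subseteq H$; (H2) $h\in H,e\in E$ imply $he\in H$ and $(he)^*=h^*e$; (H3) if $h\in H$, $k\in H\setminus E$, $h^*\ge k^+$ then $hk\in H$ and $(hk)^*=k^*$; (H4) every $m\in M$ is $\sigma$-related to some $h\in H$; (H5) if $h,k,w\in H$, $hk\,\sigma\,w$ and $k^*=w^*$, then some $u\in H$ has $u\,\sigma\,h$ and $u^*\ge k^+$. $H$ is proper if for all $h,k\in H$: ($h^*=k^*$ and $h\,\sigma\,k$) iff $h=k$. *)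

(* Defs.v *)
Record StarLeftEhresmann : Type := {
  carrier :> Type;
  mul : carrier -> carrier -> carrier;
  one : carrier;
  plus : carrier -> carrier;
  star : carrier -> carrier;
  mulA : forall x y z, mul x (mul y z) = mul (mul x y) z;
  mul1l : forall x, mul one x = x;
  mul1r : forall x, mul x one = x;
  ax_plus_l : forall x, mul (plus x) x = x;
  ax_plus_proj : forall x y, plus (mul (plus x) (plus y)) = mul (plus x) (plus y);
  ax_plus_comm : forall x y, mul (plus x) (plus y) = mul (plus y) (plus x);
  ax_plus_mul : forall x y, plus (mul x y) = plus (mul x (plus y));
  ax_star_r : forall x, mul x (star x) = x;
  ax_star_idem : forall x, star (star x) = star x;
  ax_star_comm : forall x y, mul (star x) (star y) = mul (star y) (star x);
  ax_star_mul : forall x y, mul (star (mul x (star y))) (star y) = star (mul x (star y));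
  ax_plus_star : forall x, plus (star x) = star x;
  ax_star_plus : forall x, star (plus x) = plus x
}.

Arguments mul {_} _ _.
Arguments one {_}.
Arguments plus {_} _.
Arguments star {_} _.

Section Defs.
Variable M : StarLeftEhresmann.

Definition proj (e : M) : Prop := exists a : M, e = plus a.

Definition ple (e f : M) : Prop := mul e f = e.

Definition monoid_congruence (R : M -> M -> Prop) : Prop :=
  (forall x, R x x) /\ (forall x y, R x y -> R y x) /\
  (forall x y z, R x y -> R y z -> R x z) /\
  (forall x y u v, R x y -> R u v -> R (mul x u) (mul y v)).

Definition sigma (x y : M) : Prop :=
  forall R : M -> M -> Prop, monoid_congruence R ->
    (forall e f, proj e -> proj f -> R e f) -> R x y.

Definition atomic (H : M -> Prop) : Prop :=
  (forall e, proj e -> H e) /\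
  (forall h e, H h -> proj e -> H (mul h e) /\ star (mul h e) = mul (star h) e) /\
  (forall h k, H h -> H k -> ~ proj k -> ple (plus k) (star h) ->
              H (mul h k) /\ star (mul h k) = star k) /\
  (forall m, exists h, H h /\ sigma m h) /\
  (forall h k w, H h -> H k -> H w -> sigma (mul h k) w -> star k = star w ->
              exists u, H u /\ sigma u h /\ ple (plus k) (star u)).

Definition proper (H : M -> Prop) : Prop :=
  forall h k, H h -> H k -> ((star h = star k /\ sigma h k) <-> h = k).

End Defs.

Arguments proj {M} e.
Arguments ple {M} e f.
Arguments sigma {M} x y.
Arguments atomic {M} H.
Arguments proper {M} H.

(* Main.v *)
Require Import Defs.

Section S.
Variable M : StarLeftEhresmann.

Lemma sig_refl (x : M) : sigma x x.
Proof. intros R [r _] _. apply r. Qed.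

Lemma sig_sym (x y : M) : sigma x y -> sigma y x.
Proof. intros H R HR HE. destruct HR as (r & s & t & c). apply s. apply H; [repeat split; auto|]; auto. Qed.

Lemma sig_trans (x y z : M) : sigma x y -> sigma y z -> sigma x z.
Proof. intros H1 H2 R HR HE. pose proof HR as (r & s & t & c). apply (t x y z); [apply H1|apply H2]; auto. Qed.

Lemma plus_one : plus (@one M) = one.
Proof. rewrite <- (mul1r M (plus one)). apply ax_plus_l. Qed.

Lemma proj_star (k : M) : proj (star k).
Proof. exists (star k). symmetry. apply ax_plus_star. Qed.

Lemma sig_e (x e : M) : proj e -> sigma x (mul x e).
Proof.
  intros He R HR HE. pose proof HR as (r & s & t & c).
  assert (R (mul x one) (mul x e)) as G. apply c. apply r. apply HE; auto.
  exists one. symmetry. apply plus_one.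
  rewrite mul1r in G. exact G.
Qed.
End S.

Theorem mainTheorem6 (M : StarLeftEhresmann) (H : M -> Prop) :
  atomic H ->
  (proper H <->
   (forall h k : M, H h -> H k ->
      (sigma h k <-> mul h (star k) = mul k (star h)))).
Proof.
  intros (H1 & H2 & _).
  split.
  - intros P h k Hh Hk. split.
    + intros Hs.
      destruct (H2 h (star k) Hh (proj_star M k)) as [A1 A2].
      destruct (H2 k (star h) Hk (proj_star M h)) as [B1 B2].
      apply (proj1 (P _ _ A1 B1)). split.
      * rewrite A2, B2. apply ax_star_comm.
      * eapply sig_trans. apply sig_sym, sig_e, proj_star.
        eapply sig_trans. apply Hs. apply sig_e, proj_star.
    + intros E. eapply sig_trans. apply (sig_e M h (star k)), proj_star.
      rewrite E. apply sig_sym, sig_e, proj_star.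
  - intros C h k Hh Hk. split.
    + intros [Es Hs]. apply (proj1 (C h k Hh Hk)) in Hs.
      assert (mul h (star h) = mul k (star k)) as G.
      { transitivity (mul h (star k)). rewrite Es; reflexivity. rewrite Hs, Es. reflexivity. }
      rewrite !ax_star_r in G. exact G.
    + intros ->. split; [reflexivity | apply sig_refl].
Qed.
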